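(* Let $R>0$ and let $t\mapsto p_t$, $t\in[0,1]$, be a convex curve from $e_R^1$ to $e_R^2$ contained in $T(e_R^1,e_R^2)$. Then for all $0\le t_1<t_2<t_3\le 1$ we have $p_{t_2}\in T(p_{t_1},p_{t_3})$.
   Context: Let $Q=[0,\infty)\times[0,\infty)\subset\mathbb{R}^2$, $e_R^1=(R,0)$, $e_R^2=(0,R)$, and let $\arg(p)\in[0,\pi/2]$ denote the polar angle of $p\in Q\setminus\{0\}$. For $u,w\in Q$ with $\arg(u)<\arg(w)$ define $T(u,w)=\{\lambda u+\mu w\in Q:\ \lambda\ge0,\ \mu\ge0,\ \lambda+\mu\ge1,\ \lambda+1\ge\mu,\ \mu+1\ge\lambda\}$. A curve $t\mapsto p_t$ in $Q$, $t\in[0,1]$, from $e_R^1$ to $e_R^2$ (i.e. $p_0=e_R^1$, $p_1=e_R^2$) is called convex if it is continuous, $t\mapsto\arg(p_t)$ is strictly increasing, and the bounded component of $Q\setminus\{p_t: t\in[0,1]\}$ is convex. *)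

(* Defs.v *)
(* R : realType, points of the plane are R * R
   (with the product topology, i.e. the Euclidean topology of R^2). *)
From HB Require Import structures.
From mathcomp Require Import all_boot all_order all_algebra.
From mathcomp Require Import all_classical all_reals all_analysis.
Set Implicit Arguments. Unset Strict Implicit. Unset Printing Implicit Defensive.
Import Order.TTheory GRing.Theory Num.Theory numFieldNormedType.Exports.
Local Open Scope classical_set_scope.
Local Open Scope ring_scope.

Section Defs.
Variable R : realType.

Definition Quad : set (R * R) := [set p | 0 <= p.1 /\ 0 <= p.2].

Definition eR1 (r : R) : R * R := (r, 0).
Definition eR2 (r : R) : R * R := (0, r).

(* polar angle of p in Q \ {0}, with value in [0, pi/2] *)
Definition parg (p : R * R) : R :=
  acos (p.1 / Num.sqrt (p.1 ^+ 2 + p.2 ^+ 2)).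

Definition lincomb (l m : R) (u w : R * R) : R * R :=
  (l * u.1 + m * w.1, l * u.2 + m * w.2).

Definition Tset (u w : R * R) : set (R * R) :=
  [set q | Quad q /\ exists l m : R,
     q = lincomb l m u w /\
     [/\ 0 <= l, 0 <= m, 1 <= l + m, m <= l + 1 & l <= m + 1]].

Definition bounded_plane (C : set (R * R)) : Prop :=
  exists M : R, forall q, C q -> `|q.1| <= M /\ `|q.2| <= M.

Definition convex_plane (C : set (R * R)) : Prop :=
  forall a b, C a -> C b -> forall l : R, 0 <= l -> l <= 1 ->
    C (lincomb l (1 - l) a b).

Definition trace (p : R -> R * R) : set (R * R) := p @` `[0, 1].

(* Convex curve in Q from e_R^1 to e_R^2.  The curve lies in Q and avoids 0
   (so that arg(p_t) is defined); "the bounded component of Q \ trace is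
   convex" is stated as: every bounded connected component of Q \ trace
   is convex. *)
Definition convex_curve (r : R) (p : R -> R * R) : Prop :=
  [/\ p 0 = eR1 r /\ p 1 = eR2 r,
      {within `[0, 1], continuous p},
      (forall t, 0 <= t <= 1 -> Quad (p t) /\ p t <> 0),
      (forall s t, 0 <= s <= 1 -> 0 <= t <= 1 -> s < t -> parg (p s) < parg (p t))
    & (forall x, (Quad `\` trace p) x ->
        bounded_plane (connected_component (Quad `\` trace p) x) ->
        convex_plane (connected_component (Quad `\` trace p) x))].

End Defs.

(* Main.v *)
Require Import Defs.
From HB Require Import structures.
From mathcomp Require Import all_boot all_order all_algebra.
From mathcomp Require Import all_classical all_reals all_analysis.
From mathcomp Require Import ring lra.
Set Implicit Arguments. Unset Strict Implicit. Unset Printing Implicit Defensive.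
Import Order.TTheory GRing.Theory Num.Theory numFieldNormedType.Exports.
Local Open Scope classical_set_scope.
Local Open Scope ring_scope.

Definition clamp (R : realType) (t : R) : R := Num.max 0 (Num.min 1 t).

Lemma clamp_in (R : realType) (t : R) : `[0, 1]%classic (clamp t).
Proof.
rewrite /= in_itv /= /clamp; apply/andP; split; first by rewrite le_max lexx.
by rewrite ge_max ler01 ge_min lexx.
Qed.

Lemma clamp_id (R : realType) (t : R) : 0 <= t <= 1 -> clamp t = t.
Proof.
move=> /andP[t0 t1]; rewrite /clamp.
by rewrite (min_r t1) (max_r t0).
Qed.

Lemma clamp_cont (R : realType) : continuous (@clamp R).
Proof.
move=> x.
have h := @continuous_max R R (fun=> 0) (fun t => Num.min 1 t) x.
apply: h; first exact: cvg_cst.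
have h2 := @continuous_min R R (fun=> 1) id x.
apply: h2; first exact: cvg_cst.
exact: cvg_id.
Qed.

Lemma ext_cont (R : realType) (U : topologicalType) (p : R -> U) :
  {within `[0, 1], continuous p} -> continuous (p \o @clamp R).
Proof.
move=> hc x.
have h := (@subspace_continuousP R `[0, 1]%classic _ p).1 hc (clamp x) (clamp_in x).
apply: cvg_comp h.
move=> W hW.
have h' : nbhs x (fun z => `[0, 1]%classic (clamp z) -> W (clamp z)) := clamp_cont hW.
rewrite /=; move: h'; apply: filterS => z; apply; exact: clamp_in.
Qed.
Lemma unit_bounds (R : realType) (x y : R) : 0 <= x -> 0 <= y -> (x, y) != 0 ->
  0 < Num.sqrt (x ^+ 2 + y ^+ 2) /\ 0 <= x / Num.sqrt (x ^+ 2 + y ^+ 2) <= 1.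
Proof.
move=> hx hy nz.
have s0 : 0 < x ^+ 2 + y ^+ 2.
  have [x0|xp] := eqVneq x 0.
    have [y0|yp] := eqVneq y 0; first by move: nz; rewrite x0 y0 eqxx.
    have yp' : 0 < y by rewrite lt_def yp hy.
    have := sqr_ge0 x; have := exprn_gt0 2 yp'; lra.
  have xp' : 0 < x by rewrite lt_def xp hx.
  have := sqr_ge0 y; have := exprn_gt0 2 xp'; lra.
have n0 : 0 < Num.sqrt (x ^+ 2 + y ^+ 2) by rewrite sqrtr_gt0.
split => //; apply/andP; split; first by apply: divr_ge0 => //; exact: ltW.
rewrite ler_pdivrMr // mul1r.
have e := sqr_sqrtr (ltW s0).
have : x ^+ 2 <= Num.sqrt (x ^+ 2 + y ^+ 2) ^+ 2 by rewrite e lerDl sqr_ge0.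
by rewrite ler_pXn2r // ?nnegrE //; exact: ltW.
Qed.

Lemma parg_cr (R : realType) (a b : R * R) :
  0 <= a.1 -> 0 <= a.2 -> a != 0 -> 0 <= b.1 -> 0 <= b.2 -> b != 0 ->
  parg a < parg b -> 0 < a.1 * b.2 - a.2 * b.1.
Proof.
case: a => a1 a2; case: b => b1 b2 /= ha1 ha2 na hb1 hb2 nb.
rewrite /parg /=.
have [n1 /andP[u1 u1']] := unit_bounds ha1 ha2 na.
have [n2 /andP[u2 u2']] := unit_bounds hb1 hb2 nb.
set A := Num.sqrt _ in n1 u1 u1' *; set B := Num.sqrt _ in n2 u2 u2' *.
move=> h.
have : cos (acos (b1 / B)) < cos (acos (a1 / A)).
  rewrite ltr_cos // in_itv /= ?acos_ge0 ?acos_lepi //; lra.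
rewrite !acosK ?in_itv /=; try lra.
rewrite ltr_pdivrMr // mulrAC ltr_pdivlMr // => k.
have eA : A ^+ 2 = a1 ^+ 2 + a2 ^+ 2 by rewrite sqr_sqrtr // addr_ge0 // sqr_ge0.
have eB : B ^+ 2 = b1 ^+ 2 + b2 ^+ 2 by rewrite sqr_sqrtr // addr_ge0 // sqr_ge0.
have k2 : (b1 * A) ^+ 2 < (a1 * B) ^+ 2.
  rewrite ltr_pXn2r // nnegrE; [apply: mulr_ge0 => //| apply: mulr_ge0]; lra.
rewrite !exprMn eA eB in k2.
have k3 : (b1 * a2) ^+ 2 < (a1 * b2) ^+ 2 by rewrite !exprMn; lra.
rewrite ltr_pXn2r // ?nnegrE in k3; try by apply: mulr_ge0.
lra.
Qed.
Lemma ALG (R : realFieldType) (x1 y1 x2 y2 x3 y3 r : R) :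
  0 <= x1 -> 0 <= y1 -> 0 <= x2 -> 0 <= y2 -> 0 <= x3 -> 0 <= y3 -> 0 < r ->
  0 < x1 * y2 - y1 * x2 -> 0 < x2 * y3 - y2 * x3 -> 0 < x1 * y3 - y1 * x3 ->
  x1 - y1 <= r -> y3 - x3 <= r -> x2 - y2 <= r ->
  0 <= (x1 - r) * y2 - y1 * (x2 - r) ->
  (x2 * y3 - y2 * x3) - (x1 * y2 - y1 * x2) <= x1 * y3 - y1 * x3.
Proof.
move=> hx1 hy1 hx2 hy2 hx3 hy3 hr c12 c23 c13 s1 s3 s2 lt.
have F4 : 0 <= (x1 + x3) * y1 - (y1 + y3) * (x1 - r).
  have e : (x1 + x3) * y1 - (y1 + y3) * (x1 - r) =
     y1 * (x3 + r - y3) + y3 * (y1 - x1 + r) by ring.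
  rewrite e; apply: addr_ge0; apply: mulr_ge0; lra.
have Id : (x1 * y3 - y1 * x3) * ((x1 - r) * y2 - y1 * (x2 - r))
   + (r * y1) * ((x2 - x1) * (y1 + y3) - (y2 - y1) * (x1 + x3))
   + (x1 * y2 - y1 * x2) * ((x1 + x3) * y1 - (y1 + y3) * (x1 - r)) = 0 by ring.
have [y1p|] := ltrP 0 y1.
  have h : (r * y1) * ((x2 - x1) * (y1 + y3) - (y2 - y1) * (x1 + x3)) <= 0.
    have := mulr_ge0 (ltW c13) lt; have := mulr_ge0 (ltW c12) F4; lra.
  have ry : 0 < r * y1 by apply: mulr_gt0.
  have : (x2 - x1) * (y1 + y3) - (y2 - y1) * (x1 + x3) <= 0.
    by rewrite -(pmulr_rle0 _ ry).
  lra.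
move=> y10; have y0 : y1 = 0 by lra.
move: c12 lt s1; rewrite y0 !mul0r !subr0 => c12 lt s1.
have y2p : 0 < y2.
  rewrite lt_neqAle hy2 andbT; apply/eqP => h; rewrite -h mulr0 in c12; lra.
have : r <= x1.
  by rewrite -subr_ge0; move: lt; rewrite pmulr_lge0.
move=> rx; have x1r : x1 = r by lra.
rewrite x1r.
have : x2 * y3 <= (y2 + r) * y3 by apply: ler_wpM2r => //; lra.
have : y2 * (y3 - x3 - r) <= 0 by apply: mulr_ge0_le0; lra.
lra.
Qed.

Lemma cramer (R : fieldType) (a1 a2 b1 b2 c1 c2 : R) :
  a1 * c2 - a2 * c1 != 0 ->
  (b1 * c2 - b2 * c1) + (a1 * b2 - a2 * b1) != 0 ->
  let D := a1 * c2 - a2 * c1 in let L := b1 * c2 - b2 * c1 in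
  let Mu := a1 * b2 - a2 * b1 in
  b1 = L / (L + Mu) * ((L + Mu) / D * a1) + (1 - L / (L + Mu)) * ((L + Mu) / D * c1) /\
  b2 = L / (L + Mu) * ((L + Mu) / D * a2) + (1 - L / (L + Mu)) * ((L + Mu) / D * c2).
Proof.
move=> Dn LMn D L Mu; rewrite /D /L /Mu.
split; field; by rewrite Dn LMn.
Qed.
Lemma cramer2 (R : fieldType) (a1 a2 b1 b2 c1 c2 : R) :
  a1 * c2 - a2 * c1 != 0 ->
  b1 = (b1 * c2 - b2 * c1) / (a1 * c2 - a2 * c1) * a1 + (a1 * b2 - a2 * b1) / (a1 * c2 - a2 * c1) * c1 /\
  b2 = (b1 * c2 - b2 * c1) / (a1 * c2 - a2 * c1) * a2 + (a1 * b2 - a2 * b1) / (a1 * c2 - a2 * c1) * c2.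
Proof.
move=> Dn; split; field; by rewrite Dn.
Qed.

Definition cr (R : realType) (a b : R * R) : R := a.1 * b.2 - a.2 * b.1.
Definition sc (R : realType) (k : R) (a : R * R) : R * R := (k * a.1, k * a.2).
Definition turn (R : realType) (a b c : R * R) : R :=
  (b.1 - a.1) * (c.2 - a.2) - (b.2 - a.2) * (c.1 - a.1).

Section Main.
Variables (R : realType) (r : R) (p : R -> R * R).
Hypothesis r0 : 0 < r.
Hypothesis Hcc : convex_curve r p.
Hypothesis HT : forall t, 0 <= t <= 1 -> Tset (eR1 r) (eR2 r) (p t).

Let P := p \o @clamp R.

Lemma Pcont : continuous P.
Proof. by case: Hcc => _ hc _ _ _; exact: ext_cont. Qed.

Lemma PE t : 0 <= t <= 1 -> P t = p t.
Proof. by move=> h; rewrite /P /= clamp_id. Qed.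

Lemma quadp t : 0 <= t <= 1 -> [/\ 0 <= (p t).1, 0 <= (p t).2 & p t != 0].
Proof. by case: Hcc => _ _ hq _ _ /hq [[h1 h2] /eqP h3]. Qed.

Lemma stripp t : 0 <= t <= 1 ->
  [/\ (p t).1 - (p t).2 <= r, (p t).2 - (p t).1 <= r & r <= (p t).1 + (p t).2].
Proof.
move=> /HT [_ [l [m [-> [l0 m0 lm1 ml lm]]]]]; rewrite /lincomb /eR1 /eR2 /=.
rewrite !mulr0 !addr0 !add0r.
have h1 : 0 <= (m + 1 - l) * r by apply: mulr_ge0; [lra | exact: ltW].
have h2 : 0 <= (l + 1 - m) * r by apply: mulr_ge0; [lra | exact: ltW].
have h3 : 0 <= (l + m - 1) * r by apply: mulr_ge0; [lra | exact: ltW].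
rewrite !mulrBl !mulrDl !mul1r in h1 h2 h3.
split; lra.
Qed.

Lemma crp s t : 0 <= s -> s < t -> t <= 1 -> 0 < cr (p s) (p t).
Proof.
move=> s0 st t1.
have hs : 0 <= s <= 1 by apply/andP; split => //; lra.
have ht : 0 <= t <= 1 by apply/andP; split => //; lra.
case: Hcc => _ _ _ ha _.
have [a1 a2 a3] := quadp hs; have [b1 b2 b3] := quadp ht.
by apply: parg_cr => //; apply: ha.
Qed.

Lemma pends : p 0 = (r, 0) /\ p 1 = (0, r).
Proof. by case: Hcc => -[-> ->]. Qed.

Lemma cr0_eq t t' : 0 <= t <= 1 -> 0 <= t' <= 1 -> cr (p t) (p t') = 0 -> t = t'.
Proof.
move=> /andP[t0 t1] /andP[t0' t1'] h.
have [tt|tt|//] := ltgtP t t'.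
  by have := crp t0 tt t1'; rewrite h ltxx.
have := crp t0' tt t1; rewrite /cr in h *; lra.
Qed.

Lemma fst_cont (z : R * R) : (@fst R R) @ z --> z.1.
Proof. exact: cvg_fst. Qed.

Lemma snd_cont (z : R * R) : (@snd R R) @ z --> z.2.
Proof. exact: cvg_snd. Qed.

Lemma bnd : exists B, 0 < B /\ forall t, 0 <= t <= 1 -> (p t).1 + (p t).2 <= B.
Proof.
have cf : {within `[0, 1], continuous (fun t => (P t).1 + (P t).2)}.
  apply: continuous_subspaceT => x; apply: cvgD.
    by apply: (cvg_comp P fst); [exact: Pcont | exact: fst_cont].
  by apply: (cvg_comp P snd); [exact: Pcont | exact: snd_cont].
have [c c01 hc] := EVT_max ler01 cf.
have c01' : 0 <= c <= 1 by move: c01; rewrite in_itv.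
exists ((P c).1 + (P c).2); split.
  by rewrite PE //; have [_ _ h] := stripp c01'; exact: (lt_le_trans r0 h).
by move=> t ht; rewrite -PE //; apply: hc; rewrite in_itv.
Qed.

Definition Aset := @Quad R `\` trace p.
Definition Kset := connected_component Aset 0.

Lemma trace_mem q : trace p q <-> exists t, 0 <= t <= 1 /\ p t = q.
Proof.
split; first by case=> t ht <-; exists t; split => //; move: ht; rewrite /= in_itv.
by case=> t [ht <-]; exists t => //=; rewrite in_itv.
Qed.

Lemma A0 : Aset 0.
Proof.
split; first by split.
move=> /trace_mem [t [ht pt]]; have [_ _] := quadp ht; by rewrite pt eqxx.
Qed.

Lemma sc_eq t t' k k' : 0 <= t <= 1 -> 0 <= t' <= 1 -> 0 < k -> 0 < k' ->
  sc k (p t) = sc k' (p t') -> t = t' /\ k = k'.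
Proof.
move=> ht ht' k0 k0' [e1 e2].
have tt : t = t'.
  apply: cr0_eq => //.
  have : k * k' * cr (p t) (p t') = 0.
    rewrite /cr; have -> : k * k' * ((p t).1 * (p t').2 - (p t).2 * (p t').1)
      = (k * (p t).1) * (k' * (p t').2) - (k * (p t).2) * (k' * (p t').1) by ring.
    rewrite e1 e2; ring.
  by move/eqP; rewrite mulf_eq0 mulf_eq0 (gt_eqF k0) (gt_eqF k0') /= => /eqP.
split => //; subst t'.
have [h1 h2 h3] := quadp ht.
have [x0|x0] := eqVneq (p t).1 0.
  have y0 : (p t).2 != 0.
    apply: contra h3 => /eqP y0; apply/eqP.
    by rewrite [p t]surjective_pairing x0 y0.
  by move: e2 => /eqP; rewrite (inj_eq (mulIf y0)) => /eqP.
by move: e1 => /eqP; rewrite (inj_eq (mulIf x0)) => /eqP.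
Qed.

Lemma ray_A t k : 0 <= t <= 1 -> 0 <= k < 1 -> Aset (sc k (p t)).
Proof.
move=> ht /andP[k0 k1]; have [h1 h2 h3] := quadp ht.
split; first by split; apply: mulr_ge0.
move=> /trace_mem [t' [ht' e]].
have [k00|kp] := eqVneq k 0.
  have [_ _] := quadp ht'; rewrite e k00 /sc !mul0r.
  by rewrite eqxx.
have kp' : 0 < k by rewrite lt_def kp k0.
have e' : sc k (p t) = sc 1 (p t').
  by rewrite [in RHS]/sc !mul1r -surjective_pairing e.
have [_ kk] := sc_eq ht ht' kp' ltr01 e'.
by move: k1; rewrite kk ltxx.
Qed.

Lemma sc_cont (a : R * R) : continuous (fun k : R => sc k a).
Proof.
move=> k; rewrite /sc.
have h1 : (fun k0 : R => k0 * a.1) @ k --> k * a.1.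
  by apply: cvgM; [exact: cvg_id | exact: cvg_cst].
have h2 : (fun k0 : R => k0 * a.2) @ k --> k * a.2.
  by apply: cvgM; [exact: cvg_id | exact: cvg_cst].
exact: (cvg_pair h1 h2).
Qed.

Lemma seg_K t k : 0 <= t <= 1 -> 0 <= k < 1 -> Kset (sc k (p t)).
Proof.
move=> ht hk.
set S := (fun k => sc k (p t)) @` `[0, 1[%classic.
have cS : connected S.
  apply: (@connected_continuous_connected R _ `[0, 1[%classic (fun k => sc k (p t))).
    by apply/connected_intervalP; exact: interval_is_interval.
  by apply: continuous_subspaceT; exact: sc_cont.
have S0 : S 0.
  exists 0; first by rewrite /= in_itv /= lexx ltr01.
  by rewrite /sc !mul0r.
have SA : S `<=` Aset.
  by move=> q [k' hk' <-]; apply: ray_A => //; move: hk'; rewrite /= in_itv.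
apply: (connected_component_max S0 SA cS).
by exists k => //; rewrite /= in_itv.
Qed.

Lemma ray_hit q : @Quad R q -> q != 0 ->
  exists t k, [/\ 0 <= t <= 1, 0 < k & q = sc k (p t)].
Proof.
case: q => q1 q2 [/= hq1 hq2] nq.
have cf : {within `[0, 1], continuous (fun t => cr (P t) (q1, q2))}.
  apply: continuous_subspaceT => x; rewrite /cr /=.
  apply: cvgB; apply: cvgM.
  - by apply: (cvg_comp P fst); [exact: Pcont | exact: fst_cont].
  - exact: cvg_cst.
  - by apply: (cvg_comp P snd); [exact: Pcont | exact: snd_cont].
  - exact: cvg_cst.
have [p0 p1] := pends.
have e0 : P 0 = (r, 0) by rewrite PE ?lexx ?ler01.
have e1 : P 1 = (0, r) by rewrite PE ?lexx ?ler01.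
have [c c01 hc] : exists2 c, c \in `[0, 1] & cr (P c) (q1, q2) = 0.
  apply: (IVT ler01 cf).
  rewrite e0 e1 /cr /=.
  have a : 0 <= r * q2 by apply: mulr_ge0 => //; exact: ltW.
  have b : 0 <= r * q1 by apply: mulr_ge0 => //; exact: ltW.
  rewrite !mul0r !subr0 sub0r.
  apply/andP; split.
    by rewrite ge_min; apply/orP; right; rewrite oppr_le0.
  by rewrite le_max; apply/orP; left.
have c01' : 0 <= c <= 1 by move: c01; rewrite in_itv.
rewrite PE // in hc.
have [x0 y0 nz] := quadp c01'; have [_ _ sr] := stripp c01'.
set x := (p c).1 in x0 y0 sr hc *; set y := (p c).2 in x0 y0 sr hc *.
have S0 : 0 < x + y by exact: (lt_le_trans r0 sr).
have Q0 : 0 < q1 + q2.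
  rewrite lt_def; apply/andP; split; last by apply: addr_ge0.
  apply: contra nq => /eqP h.
  have a : q1 = 0 by lra.
  have b : q2 = 0 by lra.
  by rewrite a b.
exists c, ((q1 + q2) / (x + y)); split => //; first by apply: divr_gt0.
rewrite /cr /= in hc.
have Sn : x + y != 0 by rewrite gt_eqF.
rewrite /sc -/x -/y; congr (_, _).
  apply: (mulIf Sn); rewrite mulrAC divfK //.
  have : x * q2 = y * q1 by lra.
  move=> h; rewrite mulrDr mulrDl [q1 * x]mulrC; lra.
apply: (mulIf Sn); rewrite mulrAC divfK //.
have : x * q2 = y * q1 by lra.
move=> h; rewrite mulrDr mulrDl [q2 * y]mulrC; lra.
Qed.

Lemma Pfst_cont t : (fun t => (P t).1) @ t --> (P t).1.
Proof. by apply: (cvg_comp P fst); [exact: Pcont | exact: fst_cont]. Qed.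

Lemma Psnd_cont t : (fun t => (P t).2) @ t --> (P t).2.
Proof. by apply: (cvg_comp P snd); [exact: Pcont | exact: snd_cont]. Qed.

Definition img (a b : R) : set (R * R) :=
  (fun z : R * R => sc z.2 (P z.1)) @` (`[0, 1]%classic `*` `[a, b]%classic).

Lemma img_closed a b : closed (img a b).
Proof.
apply: compact_closed; first exact: norm_hausdorff.
apply: continuous_compact; last by apply: compact_setX; exact: segment_compact.
apply: continuous_subspaceT => z; rewrite /sc.
have h1 : (fun z : R * R => z.2 * (P z.1).1) @ z --> z.2 * (P z.1).1.
  apply: cvgM; first exact: snd_cont.
  by apply: (cvg_comp fst (fun t => (P t).1)); [exact: fst_cont | exact: Pfst_cont].
have h2 : (fun z : R * R => z.2 * (P z.1).2) @ z --> z.2 * (P z.1).2.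
  apply: cvgM; first exact: snd_cont.
  by apply: (cvg_comp fst (fun t => (P t).2)); [exact: fst_cont | exact: Psnd_cont].
exact: (cvg_pair h1 h2).
Qed.

Lemma img_mem a b q : img a b q <->
  exists t k, [/\ 0 <= t <= 1, a <= k <= b & q = sc k (p t)].
Proof.
split.
  case=> -[t k] [/= ht hk] <-; exists t, k.
  move: ht hk; rewrite !in_itv /= => ht hk; split => //.
  by rewrite PE.
case=> t [k [ht hk ->]]; exists (t, k); first by split; rewrite /= in_itv.
by rewrite /= PE.
Qed.

Lemma K_sub : Kset `<=` img 0 1.
Proof.
have [B [B0 hB]] := bnd.
set M := (B + 1) / r.
set U := ~` img 1 M `&` [set q : R * R | q.1 + q.2 < B + 1].
have oU : open U.
  apply: openI; first exact/closed_openC/img_closed.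
  have -> : [set q : R * R | q.1 + q.2 < B + 1] =
     (fun q : R * R => q.1 + q.2) @^-1` [set x | x < B + 1] by [].
  apply: open_comp; last exact: open_lt.
  by move=> z _; apply: cvgD; [exact: fst_cont | exact: snd_cont].
have img00 : img 0 1 0.
  apply/img_mem; exists 0, 0; split; rewrite ?lexx ?ler01 //.
  by rewrite /sc !mul0r.
have key : forall q, Aset q -> (img 0 1 q <-> U q).
  move=> q [Qq ntr]; split.
  - move=> /img_mem [t [k [ht /andP[k0 k1'] e]]].
    have [x0 y0 nz] := quadp ht; have hb := hB t ht.
    have k1 : k != 1.
      apply: contra_notN ntr => /eqP k1; apply/trace_mem; exists t; split => //.
      by rewrite e k1 /sc !mul1r -surjective_pairing.
    have klt : k < 1 by rewrite lt_neqAle k1 k1'.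
    split.
    + move=> /img_mem [t' [k' [ht' /andP[hk1 hk2] e']]].
      have k'0 : 0 < k' by exact: (lt_le_trans ltr01 hk1).
      have [k00|kp] := eqVneq k 0.
        have [_ _ nz'] := quadp ht'.
        move: e'; rewrite e k00 /sc !mul0r => -[h1 h2].
        move: nz'; rewrite [p t']surjective_pairing.
        have -> : (p t').1 = 0.
          by apply/eqP; move/esym/eqP: h1; rewrite mulf_eq0 (gt_eqF k'0).
        have -> : (p t').2 = 0.
          by apply/eqP; move/esym/eqP: h2; rewrite mulf_eq0 (gt_eqF k'0).
        by rewrite eqxx.
      have kp' : 0 < k by rewrite lt_def kp k0.
      have [_ kk] := sc_eq ht ht' kp' k'0 (etrans (esym e) e').
      by move: klt; rewrite kk ltNge hk1.
    + rewrite /= e /sc -mulrDr.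
      have : k * ((p t).1 + (p t).2) <= (p t).1 + (p t).2.
        by rewrite ler_piMl // addr_ge0.
      lra.
  - move=> [nimg hlt].
    have [->|nq] := eqVneq q 0; first exact: img00.
    have [t [k [ht kp e]]] := ray_hit Qq nq.
    have [k1|k1] := leP k 1.
      by apply/img_mem; exists t, k; split => //; rewrite (ltW kp) k1.
    exfalso; apply: nimg; apply/img_mem; exists t, k; split => //.
    apply/andP; split; first exact: ltW.
    have [_ _ sr] := stripp ht.
    move: hlt; rewrite /= e /sc -mulrDr => hlt.
    rewrite /M ler_pdivlMr //.
    have : k * r <= k * ((p t).1 + (p t).2) by rewrite ler_pM2l.
    lra.
move=> q Kq.
have cK := @component_connected _ Aset 0.
have Bs : Kset `&` img 0 1 = Kset.
  apply: cK.
  - by exists 0; split; [exact: connected_component_refl A0 | exact: img00].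
  - exists U => //; apply/seteqP; split => z [Kz hz]; split => //;
      by apply/(key z (connected_component_sub Kz)).
  - by exists (img 0 1) => //; exact: img_closed.
by rewrite -Bs in Kq; case: Kq.
Qed.

Lemma K_bounded : bounded_plane Kset.
Proof.
have [B [B0 hB]] := bnd.
exists B => q /K_sub /img_mem [t [k [ht /andP[k0 k1] ->]]].
have [x0 y0 _] := quadp ht; have hb := hB t ht.
rewrite /sc /= !ger0_norm ?mulr_ge0 //.
have : k * (p t).1 <= (p t).1 by rewrite ler_piMl.
have : k * (p t).2 <= (p t).2 by rewrite ler_piMl.
move=> h1 h2; split; lra.
Qed.

Lemma K_convex : convex_plane Kset.
Proof. by case: Hcc => _ _ _ _ hc; apply: hc; [exact: A0 | exact: K_bounded]. Qed.

Lemma KT s t u : 0 <= s -> s < t -> t < u -> u <= 1 -> 0 <= turn (p s) (p t) (p u).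
Proof.
move=> s0 st tu u1.
have su : s < u by exact: lt_trans st tu.
have t0 : 0 <= t by exact: (le_trans s0 (ltW st)).
have t1 : t <= 1 by exact: (le_trans (ltW tu) u1).
have hs : 0 <= s <= 1 by rewrite s0 (le_trans (ltW su) u1).
have ht : 0 <= t <= 1 by rewrite t0 t1.
have hD := crp s0 su u1; have hL := crp t0 tu u1; have hM := crp s0 st t1.
rewrite leNgt; apply/negP => hneg.
have eturn : turn (p s) (p t) (p u) =
    cr (p t) (p u) + cr (p s) (p t) - cr (p s) (p u) by rewrite /turn /cr; ring.
rewrite eturn in hneg.
set D := cr (p s) (p u) in hD hneg; set L := cr (p t) (p u) in hL hneg;
  set Mu := cr (p s) (p t) in hM hneg.
have LM0 : 0 < L + Mu by apply: addr_gt0.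
have hm0 : 0 < (L + Mu) / D by apply: divr_gt0.
have hm1 : (L + Mu) / D < 1 by rewrite ltr_pdivrMr // mul1r; lra.
have hm : 0 <= (L + Mu) / D < 1 by rewrite (ltW hm0) hm1.
have hl0 : 0 <= L / (L + Mu) by apply: divr_ge0; apply: ltW.
have hl1 : L / (L + Mu) <= 1 by rewrite ler_pdivrMr // mul1r; lra.
have Ka := seg_K hs hm.
have hu : 0 <= u <= 1 by rewrite u1 (le_trans t0 (ltW tu)).
have Kc' := seg_K hu hm.
have Kb : Kset (p t).
  have -> : p t = lincomb (L / (L + Mu)) (1 - L / (L + Mu))
      (sc ((L + Mu) / D) (p s)) (sc ((L + Mu) / D) (p u)).
    have Dn : D != 0 by rewrite gt_eqF.
    have LMn : L + Mu != 0 by rewrite gt_eqF.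
    have [e1 e2] := cramer Dn LMn.
    by rewrite /lincomb /sc {1}[p t]surjective_pairing; congr (_, _).
  have := @K_convex _ _ Ka Kc' _ hl0 hl1. exact.
case: (connected_component_sub Kb) => _ ntr; apply: ntr; apply/trace_mem; by exists t.
Qed.

Lemma div_le1 (D L Mu : R) : 0 < D -> L <= Mu + D -> L / D <= Mu / D + 1.
Proof.
move=> D0 h.
have -> : Mu / D + 1 = (Mu + D) / D by rewrite mulrDl divff // gt_eqF.
by rewrite ler_pM2r // invr_gt0.
Qed.

Lemma main_res t1 t2 t3 : 0 <= t1 -> t1 < t2 -> t2 < t3 -> t3 <= 1 ->
  Tset (p t1) (p t3) (p t2).
Proof.
move=> h1 h12 h23 h3.
have t13 : t1 < t3 by exact: lt_trans h12 h23.
have t20 : 0 <= t2 by exact: (le_trans h1 (ltW h12)).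
have t21 : t2 <= 1 by exact: (le_trans (ltW h23) h3).
have ht1 : 0 <= t1 <= 1 by rewrite h1 (le_trans (ltW t13) h3).
have ht2 : 0 <= t2 <= 1 by rewrite t20 t21.
have ht3 : 0 <= t3 <= 1 by rewrite h3 (le_trans t20 (ltW h23)).
have c12 := crp h1 h12 t21; have c23 := crp t20 h23 h3; have c13 := crp h1 t13 h3.
have [qx1 qy1 _] := quadp ht1; have [qx2 qy2 _] := quadp ht2; have [qx3 qy3 _] := quadp ht3.
have [s11 s12 _] := stripp ht1; have [s21 s22 _] := stripp ht2;
  have [s31 s32 _] := stripp ht3.
have [p0 p1] := pends.
have LT1 : 0 <= ((p t1).1 - r) * (p t2).2 - (p t1).2 * ((p t2).1 - r).
  have [t10|t1p] := eqVneq t1 0.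
    by rewrite t10 p0 /= subrr mul0r mul0r subrr.
  have t1p' : 0 < t1 by rewrite lt_def t1p h1.
  have := KT (lexx 0) t1p' h12 t21.
  by rewrite /turn p0 /= !subr0.
have LT3 : 0 <= ((p t3).2 - r) * (p t2).1 - (p t3).1 * ((p t2).2 - r).
  have [t31|t3p] := eqVneq t3 1.
    by rewrite t31 p1 /= subrr mul0r mul0r subrr.
  have t3p' : t3 < 1 by rewrite lt_neqAle t3p h3.
  have := KT t20 h23 t3p' (lexx 1).
  have -> : turn (p t2) (p t3) (p 1) =
    ((p t3).2 - r) * (p t2).1 - (p t3).1 * ((p t2).2 - r) by rewrite /turn p1 /=; ring.
  by [].
have hr := r0.
have A1 := ALG qx1 qy1 qx2 qy2 qx3 qy3 hr c12 c23 c13 s11 s32 s21 LT1.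
have c12' : 0 < (p t3).2 * (p t2).1 - (p t3).1 * (p t2).2.
  by move: c23; rewrite /cr; lra.
have c23' : 0 < (p t2).2 * (p t1).1 - (p t2).1 * (p t1).2.
  by move: c12; rewrite /cr; lra.
have c13' : 0 < (p t3).2 * (p t1).1 - (p t3).1 * (p t1).2.
  by move: c13; rewrite /cr; lra.
have A3 := ALG qy3 qx3 qy2 qx2 qy1 qx1 hr c12' c23' c13' s32 s11 s22 LT3.
move: c12 c23 c13 A1 A3; rewrite /cr => c12 c23 c13 A1 A3.
set D := (p t1).1 * (p t3).2 - (p t1).2 * (p t3).1 in c13 A1 A3 *.
set L := (p t2).1 * (p t3).2 - (p t2).2 * (p t3).1 in c23 A1 A3 *.
set Mu := (p t1).1 * (p t2).2 - (p t1).2 * (p t2).1 in c12 A1 A3 *.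
have KT2 := KT h1 h12 h23 h3.
have eturn : turn (p t1) (p t2) (p t3) = L + Mu - D by rewrite /turn /L /Mu /D; ring.
rewrite eturn in KT2.
split; first by split.
exists (L / D), (Mu / D); split.
  have Dn : D != 0 by rewrite gt_eqF.
  have [e1 e2] := cramer2 (p t2).1 (p t2).2 Dn.
  by rewrite /lincomb {1}[p t2]surjective_pairing; congr (_, _).
split.
- by apply: divr_ge0; apply: ltW.
- by apply: divr_ge0; apply: ltW.
- by rewrite -mulrDl ler_pdivlMr // mul1r; lra.
- apply: div_le1 => //.
  have : (p t2).2 * (p t1).1 - (p t2).1 * (p t1).2 - ((p t3).2 * (p t2).1 - (p t3).1 * (p t2).2)
    <= (p t3).2 * (p t1).1 - (p t3).1 * (p t1).2 by exact: A3.
  rewrite /Mu /L /D; lra.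
- apply: div_le1 => //; lra.
Qed.

End Main.

Unset Implicit Arguments.

Theorem lemma3p6 (R : realType) (r : R) (p : R -> R * R) :
  0 < r -> convex_curve r p ->
  (forall t, 0 <= t <= 1 -> Tset (eR1 r) (eR2 r) (p t)) ->
  forall t1 t2 t3 : R, 0 <= t1 -> t1 < t2 -> t2 < t3 -> t3 <= 1 ->
    Tset (p t1) (p t3) (p t2).
Proof. exact: (@main_res R r p). Qed.
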